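(* Let $\Gamma_1=(V_1,W_1,E_1)$ and $\Gamma_2=(V_2,W_2,E_2)$ be bipartite graphs, and let $\mathcal{E}_1\subseteq V_1\times W_1\times\mathcal{S}$ and $\mathcal{E}_2\subseteq V_2\times W_2\times\mathcal{S}$ be strong edge colorings of $\Gamma_1$ and $\Gamma_2$ respectively, with colors from the same set $\mathcal{S}$. Define $V=W_1$, $W=\{(x,u)\in V_1\times V_2 : (x,y,s)\in\mathcal{E}_1 \text{ and } (u,v,s)\in\mathcal{E}_2 \text{ for some } y\in W_1, v\in W_2, s\in\mathcal{S}\}$, $E=\{(y,(x,u))\in V\times W : (x,y,s)\in\mathcal{E}_1 \text{ and } (u,v,s)\in\mathcal{E}_2 \text{ for some } s\in\mathcal{S}, v\in W_2\}$. Then $\Gamma=(V,W,E)$ is bipartite and $$\mathcal{E}=\{(y,(x,u),(s,v)) : (x,y,s)\in\mathcal{E}_1 \text{ and } (u,v,s)\in\mathcal{E}_2\}$$ is a strong edge coloring of $\Gamma$ with colors from $\Sigma=\{(s,v)\in\mathcal{S}\times W_2 : (u,v,s)\in\mathcal{E}_2 \text{ for some } u\in V_2\}$.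
   Context: A bipartite graph is written $(V_1,W_1,E)$ with $V_1\cap W_1=\emptyset$ and $E\subseteq V_1\times W_1$. An edge coloring of it with colors from $\mathcal{S}$ is written as a triple system $\{(v,w,s)\}$ in which each edge $(v,w)\in E$ occurs with exactly one color $s$, each color of $\mathcal{S}$ is used, and two edges sharing a vertex get different colors. It is a strong edge coloring if moreover no two distinct edges of the same color are both adjacent to (share a vertex with) a common edge; equivalently, if $(v,w,s),(v',w',s)$ are distinct colored edges then $v\ne v'$, $w\neq w'$, and neither $(v,w')$ nor $(v',w)$ is an edge. *)

(* Defs.v *)
Set Implicit Arguments.

(* A bipartite graph (V, W, E): V and W are subsets of two distinct carrier
   types (so V ∩ W = ∅ holds by typing), and E ⊆ V × W. *)
Definition is_bipartite (A B : Type) (V : A -> Prop) (W : B -> Prop)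
  (E : A -> B -> Prop) : Prop :=
  forall v w, E v w -> V v /\ W w.

Definition is_edge_coloring (A B S : Type) (V : A -> Prop) (W : B -> Prop)
  (E : A -> B -> Prop) (Sc : S -> Prop) (C : A -> B -> S -> Prop) : Prop :=
  (forall v w s, C v w s -> E v w /\ Sc s) /\
  (forall v w, E v w -> exists s, C v w s) /\
  (forall v w s s', C v w s -> C v w s' -> s = s') /\
  (forall s, Sc s -> exists v w, C v w s) /\
  (* two (distinct) edges sharing a vertex get different colors *)
  (forall v w w' s, C v w s -> C v w' s -> w = w') /\
  (forall v v' w s, C v w s -> C v' w s -> v = v').

(* Strong edge coloring, in the "equivalently" form of the paper. *)
Definition is_strong_edge_coloring (A B S : Type) (V : A -> Prop) (W : B -> Prop)
  (E : A -> B -> Prop) (Sc : S -> Prop) (C : A -> B -> S -> Prop) : Prop :=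
  is_edge_coloring V W E Sc C /\
  forall v w v' w' s, C v w s -> C v' w' s -> (v, w) <> (v', w') ->
    v <> v' /\ w <> w' /\ ~ E v w' /\ ~ E v' w.

Section Product.
Variables (A1 B1 A2 B2 S : Type).
Variables (V1 : A1 -> Prop) (W1 : B1 -> Prop) (V2 : A2 -> Prop) (W2 : B2 -> Prop).
Variable (Sc : S -> Prop).
Variables (C1 : A1 -> B1 -> S -> Prop) (C2 : A2 -> B2 -> S -> Prop).

Definition prodV : B1 -> Prop := W1.

Definition prodW : A1 * A2 -> Prop := fun p =>
  V1 (fst p) /\ V2 (snd p) /\
  exists y v s, W1 y /\ W2 v /\ Sc s /\ C1 (fst p) y s /\ C2 (snd p) v s.

Definition prodE : B1 -> A1 * A2 -> Prop := fun y p =>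
  prodV y /\ prodW p /\
  exists s v, Sc s /\ W2 v /\ C1 (fst p) y s /\ C2 (snd p) v s.

Definition prodC : B1 -> A1 * A2 -> S * B2 -> Prop := fun y p c =>
  C1 (fst p) y (fst c) /\ C2 (snd p) (snd c) (fst c).

Definition prodSigma : S * B2 -> Prop := fun c =>
  Sc (fst c) /\ W2 (snd c) /\ exists u, V2 u /\ C2 u (snd c) (fst c).
End Product.

(* Main.v *)
Require Import Defs.

Theorem lemma3p1 (A1 B1 A2 B2 S : Type)
  (V1 : A1 -> Prop) (W1 : B1 -> Prop) (E1 : A1 -> B1 -> Prop)
  (V2 : A2 -> Prop) (W2 : B2 -> Prop) (E2 : A2 -> B2 -> Prop)
  (Sc : S -> Prop)
  (C1 : A1 -> B1 -> S -> Prop) (C2 : A2 -> B2 -> S -> Prop) :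
  is_bipartite V1 W1 E1 ->
  is_bipartite V2 W2 E2 ->
  is_strong_edge_coloring V1 W1 E1 Sc C1 ->
  is_strong_edge_coloring V2 W2 E2 Sc C2 ->
  is_bipartite (prodV W1) (prodW V1 W1 V2 W2 Sc C1 C2)
               (prodE V1 W1 V2 W2 Sc C1 C2) /\
  is_strong_edge_coloring (prodV W1) (prodW V1 W1 V2 W2 Sc C1 C2)
               (prodE V1 W1 V2 W2 Sc C1 C2)
               (prodSigma V2 W2 Sc C2) (prodC C1 C2).
Proof.
  intros HB1 HB2 [[H1a [H1b [H1c [H1d [H1e H1f]]]]] H1s] [[H2a [H2b [H2c [H2d [H2e H2f]]]]] H2s].
  unfold prodV, prodW, prodE, prodC, prodSigma.
  split.
  { intros y p [Hy [Hp _]]. split; assumption. }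
  split; [split|].
  - intros y [x u] [s v] [Hc1 Hc2]; simpl in *.
    destruct (H1a _ _ _ Hc1) as [He1 Hs]. destruct (HB1 _ _ He1) as [Hx Hy].
    destruct (H2a _ _ _ Hc2) as [He2 _]. destruct (HB2 _ _ He2) as [Hu Hv].
    split.
    + split; [exact Hy|]. split.
      * split; [exact Hx|]. split; [exact Hu|]. exists y, v, s. tauto.
      * exists s, v. tauto.
    + split; [exact Hs|]. split; [exact Hv|]. exists u. tauto.
  - split.
    { intros y [x u] [_ [_ [s [v [Hs [Hv [Hc1 Hc2]]]]]]]. exists (s, v). split; assumption. }
    split.
    { intros y [x u] [s v] [s' v'] [Hc1 Hc2] [Hc1' Hc2']; simpl in *.
      assert (s = s') by eauto. subst s'.
      assert (v = v') by eauto. subst v'. reflexivity. }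
    split.
    { intros [s v] [Hs [Hv [u [Hu Hc2]]]]. simpl in *.
      destruct (H1d s Hs) as [x [y Hc1]]. exists y, (x, u). split; assumption. }
    split.
    { intros y [x u] [x' u'] [s v] [Hc1 Hc2] [Hc1' Hc2']; simpl in *.
      assert (x = x') by eauto. assert (u = u') by eauto. subst. reflexivity. }
    { intros y y' [x u] [s v] [Hc1 Hc2] [Hc1' Hc2']; simpl in *. eauto. }
  - intros y [x u] y' [x' u'] [s v] [Hc1 Hc2] [Hc1' Hc2'] Hne; simpl in *.
    assert (Hyy : y <> y').
    { intro Heq; subst y'. assert (x = x') by eauto. assert (u = u') by eauto.
      subst. apply Hne; reflexivity. }
    assert (Hn1 : (x, y) <> (x', y')) by (intro H; inversion H; contradiction).
    destruct (H1s _ _ _ _ _ Hc1 Hc1' Hn1) as [_ [_ [Hn2 Hn3]]].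
    split; [exact Hyy|]. split.
    { intro H; inversion H; subst. apply Hyy; eauto. }
    split.
    + intros [_ [_ [s'' [v'' [_ [_ [Hc _]]]]]]]. simpl in Hc.
      apply Hn3. exact (proj1 (H1a _ _ _ Hc)).
    + intros [_ [_ [s'' [v'' [_ [_ [Hc _]]]]]]]. simpl in Hc.
      apply Hn2. exact (proj1 (H1a _ _ _ Hc)).
Qed.
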